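(* Every Tarskian logic $\mathcal{L}=({\bf F}(\Theta,\mathcal{V}),\vdash)$ is characterized by a two-valued RNmatrix, i.e. there is an RNmatrix $\mathcal{M}=(\mathcal{A},\{1\},\mathcal{F})$ over $\Theta$ whose multialgebra $\mathcal{A}$ has universe $\{0,1\}$ such that for all $\Gamma\cup\{\varphi\}$, $\Gamma\vdash\varphi$ iff $\Gamma\vDash^{\mathsf{RN}}_{\mathcal{M}}\varphi$. If in addition $\mathcal{L}$ is structural, then $\mathcal{M}$ can be chosen structural.
   Context: A logic $({\bf F}(\Theta,\mathcal{V}),\vdash)$ over the formula algebra of a signature $\Theta$ (with denumerable set $\mathcal{V}$ of variables) is Tarskian if $\vdash$ is reflexive ($\varphi\in\Gamma\Rightarrow\Gamma\vdash\varphi$), monotone, and satisfies cut (if $\Gamma\vdash\delta$ for all $\delta\in\Delta$ and $\Delta\vdash\psi$ then $\Gamma\vdash\psi$); structural if closed under substitutions (endomorphisms of the formula algebra). A $\Theta$-multialgebra assigns to each $n$-ary connective $\sigma$ a function $\sigma_{\mathcal{A}}:A^n\to\wp(A)\setminus\{\emptyset\}$; a valuation is $\nu:{\bf F}(\Theta,\mathcal{V})\to A$ with $\nu(\sigma(\varphi_1,\dots,\varphi_n))\in\sigma_{\mathcal{A}}(\nu(\varphi_1),\dots,\nu(\varphi_n))$. An RNmatrix is $(\mathcal{A},D,\mathcal{F})$ with $\emptyset\neq D\subseteq A$ and $\mathcal{F}$ a set of valuations; it is structural if $\nu\circ\rho\in\mathcal{F}$ whenever $\nu\in\mathcal{F}$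 and $\rho$ is a substitution; $\Gamma\vDash^{\mathsf{RN}}_{\mathcal{M}}\varphi$ iff every $\nu\in\mathcal{F}$ with $\nu[\Gamma]\subseteq D$ has $\nu(\varphi)\in D$. *)

(* Defs.v *)
From Stdlib Require Import Fin.

Definition signature := nat -> Type.

(* Formula algebra F(Theta, V) with V = nat (denumerably many variables). *)
Inductive formula (Theta : signature) : Type :=
| Var : nat -> formula Theta
| App : forall n : nat, Theta n -> (Fin.t n -> formula Theta) -> formula Theta.
Arguments Var {Theta} _.
Arguments App {Theta} n _ _.

Definition fset (Theta : signature) := formula Theta -> Prop.

(* Substitutions = endomorphisms of the (absolutely free) formula algebra,
   determined by their values on variables. *)
Fixpoint subst {Theta : signature} (s : nat -> formula Theta) (phi : formula Theta)
  : formula Theta :=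
  match phi with
  | Var x => s x
  | App n c args => App n c (fun i => subst s (args i))
  end.

Definition cons_rel (Theta : signature) := fset Theta -> formula Theta -> Prop.

Definition tarskian {Theta : signature} (vdash : cons_rel Theta) : Prop :=
  (forall (Gamma : fset Theta) phi, Gamma phi -> vdash Gamma phi) /\
  (forall (Gamma Delta : fset Theta) phi,
      (forall psi, Gamma psi -> Delta psi) -> vdash Gamma phi -> vdash Delta phi) /\
  (forall (Gamma Delta : fset Theta) psi,
      (forall delta, Delta delta -> vdash Gamma delta) -> vdash Delta psi ->
      vdash Gamma psi).

Definition structural_logic {Theta : signature} (vdash : cons_rel Theta) : Prop :=
  forall (s : nat -> formula Theta) (Gamma : fset Theta) phi,
    vdash Gamma phi ->
    vdash (fun psi => exists gamma, Gamma gamma /\ psi = subst s gamma) (subst s phi).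

(* A Theta-multialgebra with carrier A: each n-ary connective is interpreted
   as a map A^n -> (nonempty subsets of A). *)
Record multialgebra (Theta : signature) (A : Type) := {
  mop : forall n : nat, Theta n -> (Fin.t n -> A) -> A -> Prop;
  mop_nonempty : forall n (c : Theta n) (a : Fin.t n -> A), exists b, mop n c a b
}.
Arguments mop {Theta A} _ n _ _ _.

Definition valuation {Theta : signature} {A : Type} (M : multialgebra Theta A)
  (nu : formula Theta -> A) : Prop :=
  forall n (c : Theta n) (args : Fin.t n -> formula Theta),
    mop M n c (fun i => nu (args i)) (nu (App n c args)).

Record RNmatrix (Theta : signature) (A : Type) := {
  rn_alg : multialgebra Theta A;
  rn_D : A -> Prop;
  rn_D_nonempty : exists a, rn_D a;
  rn_F : (formula Theta -> A) -> Prop;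
  rn_F_val : forall nu, rn_F nu -> valuation rn_alg nu
}.
Arguments rn_alg {Theta A} _.
Arguments rn_D {Theta A} _ _.
Arguments rn_F {Theta A} _ _.

Definition structural_RN {Theta : signature} {A : Type} (M : RNmatrix Theta A) : Prop :=
  forall nu (s : nat -> formula Theta),
    rn_F M nu -> rn_F M (fun phi => nu (subst s phi)).

Definition RN_conseq {Theta : signature} {A : Type} (M : RNmatrix Theta A)
  (Gamma : fset Theta) (phi : formula Theta) : Prop :=
  forall nu, rn_F M nu ->
    (forall gamma, Gamma gamma -> rn_D M (nu gamma)) -> rn_D M (nu phi).

(* Two-valued: carrier {0,1} = bool (false = 0, true = 1), designated set {1}. *)
Definition two_valued_char {Theta : signature} (vdash : cons_rel Theta)
  (M : RNmatrix Theta bool) : Prop :=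
  (forall b, rn_D M b <-> b = true) /\
  (forall Gamma phi, vdash Gamma phi <-> RN_conseq M Gamma phi).

(* Main.v *)
Require Import Defs.
From Stdlib Require Import ClassicalDescription.

Definition triv_alg (Theta : signature) : multialgebra Theta bool.
Proof.
  refine {| mop := fun _ _ _ _ => True |}.
  intros; exists true; exact I.
Defined.

Definition theoryF {Theta : signature} (vdash : cons_rel Theta)
  (nu : formula Theta -> bool) : Prop :=
  exists Delta : fset Theta, forall phi, nu phi = true <-> vdash Delta phi.

Definition theM (Theta : signature) (vdash : cons_rel Theta) : RNmatrix Theta bool.
Proof.
  refine {| rn_alg := triv_alg Theta; rn_D := fun b => b = true;
            rn_F := theoryF vdash |}.
  - exists true; reflexivity.
  - intros nu _ n c args; exact I.
Defined.

Lemma theM_char (Theta : signature) (vdash : cons_rel Theta) :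
  tarskian vdash -> two_valued_char vdash (theM Theta vdash).
Proof.
  intros [Hr [Hm Hc]]. split.
  - intro b; simpl; tauto.
  - intros Gamma phi; split.
    + intros H nu [Delta HD] HG; simpl in *.
      apply HD. apply (Hc Delta Gamma phi); [|exact H].
      intros d Hd; apply HD, HG, Hd.
    + intros H.
      set (nu := fun psi => if excluded_middle_informative (vdash Gamma psi)
                            then true else false).
      assert (Hnu : forall psi, nu psi = true <-> vdash Gamma psi).
      { intro psi; unfold nu; destruct (excluded_middle_informative _);
          split; intros; auto; try discriminate; contradiction. }
      apply Hnu. apply H.
      * exists Gamma; exact Hnu.
      * intros g Hg; simpl; apply Hnu, Hr, Hg.
Qed.

Theorem mainTheorem2 (Theta : signature) (vdash : cons_rel Theta) :
  tarskian vdash ->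
  (exists M : RNmatrix Theta bool, two_valued_char vdash M) /\
  (structural_logic vdash ->
   exists M : RNmatrix Theta bool, two_valued_char vdash M /\ structural_RN M).
Proof.
  intros HT. split.
  - exists (theM Theta vdash); apply theM_char, HT.
  - intros HS. exists (theM Theta vdash); split; [apply theM_char, HT|].
    destruct HT as [Hr [Hm Hc]].
    intros nu s [Delta HD]; simpl in *.
    exists (fun psi => vdash Delta (subst s psi)).
    intro phi; split.
    + intro H; apply Hr. apply HD, H.
    + intro H. apply HD.
      apply (Hc Delta (fun psi => exists gamma,
                (fun psi => vdash Delta (subst s psi)) gamma /\ psi = subst s gamma)).
      * intros d [g [Hg ->]]; exact Hg.
      * apply HS, H.
Qed.
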